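(* Let $M\ge1$ and $K\ge1$ be integers and consider the binomial family $\mathcal F=\{f(y;\theta)=\binom{M}{y}\theta^y(1-\theta)^{M-y}:\theta\in(0,1),\ y\in\{0,\dots,M\}\}$. For any integer $r\ge1$, the condition $(r+1)K-1\le M$ is necessary and sufficient for $\mathcal F$ to be strongly identifiable in the $r$-th order; that is, it is necessary and sufficient for the following property: for any $K$ distinct points $\theta_1,\dots,\theta_K\in(0,1)$ and any reals $\beta_{jl}$, $j=1,\dots,K$, $l=0,\dots,r$, if $$\sup_{y\in\{0,\dots,M\}}\Big|\sum_{j=1}^K\sum_{l=0}^r\beta_{jl}\frac{\partial^lf(y;\theta_j)}{\partial\theta^l}\Big|=0,$$ then $\beta_{jl}=0$ for all $j=1,\dots,K$ and $l=0,\dots,r$. *)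

(* Defs.v *)
From HB Require Import structures.
From mathcomp Require Import all_boot all_order all_algebra.
From mathcomp Require Import all_classical all_reals all_analysis.
Set Implicit Arguments. Unset Strict Implicit. Unset Printing Implicit Defensive.
Import Order.TTheory GRing.Theory Num.Theory.
Local Open Scope ring_scope.

Definition binom_f (R : realType) (M y : nat) (theta : R) : R :=
  ('C(M, y))%:R * theta ^+ y * (1 - theta) ^+ (M - y).

Definition binom_df (R : realType) (M l y : nat) (theta : R) : R :=
  derive1n l (binom_f M y) theta.

Definition strongly_identifiable (R : realType) (M K r : nat) : Prop :=
  forall theta : 'I_K -> R, injective theta ->
  (forall j, 0 < theta j < 1) ->
  forall beta : 'I_K -> 'I_r.+1 -> R,
    \big[Num.max/0]_(y < M.+1)
       `| \sum_(j < K) \sum_(l < r.+1) beta j l * binom_df M l y (theta j) | = 0 ->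
    forall j l, beta j l = 0.

(* Main.v *)
Require Import Defs.
From HB Require Import structures.
From mathcomp Require Import all_boot all_order all_algebra.
From mathcomp Require Import all_classical all_reals all_analysis.
From mathcomp Require Import ring lra zify.
Import Order.TTheory GRing.Theory Num.Theory.

Module Aux.
Set Implicit Arguments. Unset Strict Implicit. Unset Printing Implicit Defensive.
Local Open Scope ring_scope.
Section PolyFacts.
Variable R : realType.

Lemma derive1n_horner (p : {poly R}) n : derive1n n (horner p) = horner (p^`(n)).
Proof.
elim: n => [|n IH]; first by rewrite derivn0.
by rewrite derive1nS IH derivnS derivE.
Qed.

Lemma XsubC_dvd_deriv (a : R) n m (q : {poly R}) : (m <= n)%N ->
  exists q', (('X - a%:P)^+n * q)^`(m) = ('X - a%:P)^+(n - m) * q'.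
Proof.
elim: m => [|m IH] Hm; first by exists q; rewrite derivn0 subn0.
have [q' Hq'] := IH (ltnW Hm).
rewrite derivnS Hq' derivM deriv_exp derivXsubC mul1r.
have -> : (n - m = (n - m.+1).+1)%N by rewrite subnSK.
exists (q' *+ (n - m.+1).+1 + ('X - a%:P) * q'^`()).
by rewrite /= exprS; ring.
Qed.

Lemma XsubC_deriv_top (a : R) l (q : {poly R}) :
  exists s, (('X - a%:P)^+l * q)^`(l) = q *+ l`! + ('X - a%:P) * s.
Proof.
elim: l q => [|l IH] q; first by exists 0; rewrite derivn0 expr0 mul1r mulr0 addr0.
have [s Hs] := IH (q *+ l.+1 + ('X - a%:P) * q^`()).
exists (q^`() *+ l`! + s).
rewrite derivSn derivM deriv_exp derivXsubC mul1r /=.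
have -> : ('X - a%:P) ^+ l *+ l.+1 * q + ('X - a%:P) ^+ l.+1 * q^`()
  = ('X - a%:P) ^+ l * (q *+ l.+1 + ('X - a%:P) * q^`()).
  by rewrite exprS; ring.
rewrite Hs mulrnDl factS mulrnA -mulrnAr mulrDr addrA.
done.
Qed.

End PolyFacts.
Section Func.
Variables (R : realType) (K r M : nat) (theta : 'I_K -> R) (beta : 'I_K -> 'I_r.+1 -> R).

Definition Lf (p : {poly R}) : R :=
  \sum_(j < K) \sum_(l < r.+1) beta j l * (p^`(l)).[theta j].

Lemma LfD p q : Lf (p + q) = Lf p + Lf q.
Proof.
rewrite /Lf -big_split; apply: eq_bigr => j _.
rewrite -big_split; apply: eq_bigr => l _.
by rewrite derivnD hornerD mulrDr.
Qed.

Lemma LfZ c p : Lf (c *: p) = c * Lf p.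
Proof.
rewrite /Lf mulr_sumr; apply: eq_bigr => j _.
rewrite mulr_sumr; apply: eq_bigr => l _.
by rewrite derivnZ hornerZ mulrCA.
Qed.

Lemma Lf0 : Lf 0 = 0.
Proof. by rewrite -(scale0r (0 : {poly R})) LfZ mul0r. Qed.

Lemma Lf_sum n (F : 'I_n -> {poly R}) : Lf (\sum_(i < n) F i) = \sum_(i < n) Lf (F i).
Proof. exact: (big_morph Lf LfD Lf0). Qed.

Lemma LfMn p n : Lf (p *+ n) = Lf p *+ n.
Proof. by elim: n => [|n IH]; rewrite ?mulr0n ?Lf0 // !mulrS LfD IH. Qed.

Hypothesis HB : forall a, (a <= M)%N -> Lf ('X^a * (1 - 'X) ^+ (M - a)) = 0.

Lemma Lf_Xn k : (k <= M)%N -> Lf 'X^k = 0.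
Proof.
move=> kM.
have -> : 'X^k = 'X^k * ('X + (1 - 'X)) ^+ (M - k) :> {poly R}.
  by rewrite addrC subrK expr1n mulr1.
rewrite exprDn mulr_sumr Lf_sum big1 // => i _.
rewrite mulrnAr LfMn mulrA -exprD.
have hi := ltn_ord i.
have -> : (k + (M - k - i) = M - i)%N by lia.
have iM : (i <= M)%N by lia.
by rewrite -[X in (1 - 'X) ^+ X](subKn iM) HB ?mul0rn // leq_subr.
Qed.

Lemma Lf_all (p : {poly R}) : (size p <= M.+1)%N -> Lf p = 0.
Proof.
move=> sp.
have -> : p = \sum_(i < M.+1) p`_i *: 'X^i.
  rewrite -poly_def; apply/polyP => i; rewrite coef_poly.
  by case: ltnP => // hi; rewrite nth_default // (leq_trans sp hi).
rewrite Lf_sum big1 // => i _.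
by rewrite LfZ Lf_Xn ?mulr0 // -ltnS.
Qed.

End Func.
Section Suff.
Variables (R : realType) (K r M : nat) (theta : 'I_K -> R) (beta : 'I_K -> 'I_r.+1 -> R).
Hypothesis inj : injective theta.
Hypothesis HL : forall p : {poly R}, (size p <= M.+1)%N -> Lf theta beta p = 0.
Hypothesis hKM : (r.+1 * K - 1 <= M)%N.

Definition hp (j : 'I_K) : {poly R} := \prod_(i < K | i != j) ('X - (theta i)%:P) ^+ r.+1.

Lemma size_hp j : size (hp j) = ((K.-1) * r.+1).+1.
Proof.
rewrite /hp size_prod; last by move=> i _; rewrite expf_neq0 // polyXsubC_eq0.
under eq_bigr => i _ do rewrite size_exp_XsubC.
rewrite sum_nat_const.
have -> : #|[pred i | i != j]| = K.-1.
  by have := cardC1 j; rewrite card_ord => <-; apply: eq_card.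
by rewrite mulnS -addnS addKn.
Qed.

Lemma hp_neq0 j : (hp j).[theta j] != 0.
Proof.
rewrite /hp horner_prod; apply/prodf_neq0 => i ij.
rewrite horner_exp hornerXsubC expf_neq0 // subr_eq0.
by apply/eqP => /inj E; move: ij; rewrite E eqxx.
Qed.

Lemma KL j (l : 'I_r.+1) : (forall m : 'I_r.+1, (l < m)%N -> beta j m = 0) -> beta j l = 0.
Proof.
move=> Hm.
set g := hp j * ('X - (theta j)%:P) ^+ l.
have sg : (size g <= M.+1)%N.
  rewrite /g (leq_trans (size_mul_leq _ _)) // size_hp size_exp_XsubC.
  have := ltn_ord l; have K0 : (0 < K)%N := leq_ltn_trans (leq0n j) (ltn_ord j).
  move=> hl; rewrite /=; nia.
have := HL sg; rewrite /Lf (bigD1 j) //= [X in _ + X]big1 ?addr0; last first.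
  move=> i ij; apply: big1 => m _.
  have [q Eq] : exists q, g = ('X - (theta i)%:P) ^+ r.+1 * q.
    rewrite /g /hp (bigD1 i) //=.
    by eexists; rewrite -!mulrA.
  rewrite Eq; have [q' ->] := XsubC_dvd_deriv (theta i) q (ltnW (ltn_ord m)).
  by rewrite hornerM horner_exp hornerXsubC subrr expr0n subn_eq0 leqNgt ltn_ord mul0r mulr0.
rewrite (bigD1 l) //= big1 ?addr0; last first.
  move=> m ml; have [lm|ml'] := ltnP l m; first by rewrite Hm ?mul0r.
  have ml2 : (m < l)%N by rewrite ltn_neqAle ml' andbT; apply: contra ml => /eqP/val_inj ->.
  rewrite /g [hp j * _]mulrC; have [q' ->] := XsubC_dvd_deriv (theta j) (hp j) ml'.
  by rewrite hornerM horner_exp hornerXsubC subrr expr0n subn_eq0 leqNgt ml2 mul0r mulr0.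
rewrite /g [hp j * _]mulrC; have [s ->] := XsubC_deriv_top (theta j) l (hp j).
rewrite hornerD hornerM hornerXsubC subrr mul0r addr0 hornerMn => /eqP.
rewrite mulf_eq0 mulrn_eq0 (negbTE (hp_neq0 j)) orbF.
by have := fact_gt0 l; rewrite lt0n => /negbTE ->; rewrite orbF => /eqP.
Qed.
Lemma all_zero j l : beta j l = 0.
Proof.
suff H : forall n (l : 'I_r.+1), (r - l <= n)%N -> beta j l = 0.
  exact: (H r l (leq_subr _ _)).
elim=> [|n IH] l' hl; apply: KL => m lm; have := ltn_ord m => mr.
- lia.
- apply: IH; lia.
Qed.
End Suff.

Section Main.
Variable R : realType.

Lemma binom_dfE (M l y : nat) (t : R) : binom_df M l y t =
  ((('C(M, y))%:R *: ('X^y * (1 - 'X) ^+ (M - y)))^`(l)).[t].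
Proof.
rewrite /binom_df.
have -> : @binom_f R M y = horner (('C(M, y))%:R *: ('X^y * (1 - 'X) ^+ (M - y))).
  by apply: boolp.funext => x; rewrite /binom_f !hornerE.
by rewrite derive1n_horner.
Qed.

Lemma bigmax_ge_seq n (s : seq 'I_n) (F : 'I_n -> R) i :
  i \in s -> F i <= \big[Num.max/0]_(y <- s) F y.
Proof.
elim: s => // a s IH; rewrite inE big_cons le_max => /orP[/eqP->|/IH->].
  by rewrite lexx.
by rewrite orbT.
Qed.

Lemma bigmax_ge n (F : 'I_n -> R) i : F i <= \big[Num.max/0]_(y < n) F y.
Proof. exact: bigmax_ge_seq (mem_index_enum _). Qed.

Lemma suff_dir (M K r : nat) : (r.+1 * K - 1 <= M)%N -> strongly_identifiable R M K r.
Proof.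
move=> hKM theta inj _ beta Hmax.
have Hy : forall y : 'I_M.+1,
    \sum_(j < K) \sum_(l < r.+1) beta j l * binom_df M l y (theta j) = 0.
  move=> y; apply/normr0_eq0/le_anti; rewrite normr_ge0 andbT.
  apply: le_trans (bigmax_ge (fun y : 'I_M.+1 => `|\sum_(j < K) \sum_(l < r.+1) beta j l * binom_df M l y (theta j)|) y) _.
  by rewrite Hmax.
apply: (@all_zero R K r M theta beta inj _ hKM).
apply: Lf_all => a aM.
have := Hy (Ordinal (aM : (a < M.+1)%N)).
under eq_bigr => j _ do under eq_bigr => l _ do rewrite binom_dfE.
rewrite -/(Lf theta beta _) LfZ => /eqP; rewrite mulf_eq0 pnatr_eq0 /=.
have := bin_gt0 M a; rewrite aM lt0n => /negbTE ->.
by move/eqP.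
Qed.

Lemma nec_dir (M K r : nat) : (1 <= K)%N -> strongly_identifiable R M K r ->
  (r.+1 * K - 1 <= M)%N.
Proof.
move=> hK HS; rewrite leqNgt; apply/negP => hlt.
have hn : (M.+1 < K * r.+1)%N by rewrite mulnC; lia.
pose theta (j : 'I_K) : R := (j.+1)%:R / (K.+1)%:R.
have inj : injective theta.
  move=> a b; rewrite /theta => /(mulIf _) E.
  have E' := E (_ : (K.+1)%:R^-1 != 0 :> R).
  apply/val_inj/eqP; rewrite -eqSS -(eqr_nat R) E' ?eqxx //.
have rng : forall j, 0 < theta j < 1.
  move=> j; rewrite divr_gt0 ?ltr0Sn //= ltr_pdivrMr ?ltr0Sn // mul1r ltr_nat ltnS ltn_ord.
  done.
pose A := \matrix_(k < K * r.+1, y < M.+1)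
  mxvec (\matrix_(j < K, l < r.+1) binom_df M l y (theta j)) 0 k : 'M[R]_(K * r.+1, M.+1).
have nz : kermx A != 0.
  rewrite -mxrank_eq0 mxrank_ker; have := rank_leq_col A; lia.
have [i0 Hi0] : exists i0, row i0 (kermx A) != 0.
  apply/existsP; apply: contraR nz => /existsPn H; apply/eqP/row_matrixP => i.
  by rewrite row0; apply/eqP; have := H i; rewrite negbK.
set u := row i0 (kermx A).
have uA : u *m A = 0 by rewrite /u -row_mul mulmx_ker row0.
have H0 : \big[Num.max/0]_(y < M.+1)
   `| \sum_(j < K) \sum_(l < r.+1) vec_mx u j l * binom_df M l y (theta j) | = 0.
  apply: (big_ind (fun x => x = 0)) => //; first by move=> x y -> ->; rewrite maxxx.
  move=> y _; apply/eqP; rewrite normr_eq0; apply/eqP.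
  transitivity ((u *m A) 0 y); last by rewrite uA mxE.
  rewrite mxE (reindex _ (curry_mxvec_bij _ _)) /= pair_bigA /=.
  by apply: eq_bigr => -[j l] _; rewrite !mxE mxvecE mxE.
have H := HS theta inj rng (vec_mx u) H0.
have : vec_mx u == 0 by apply/eqP/matrixP => j l; rewrite H mxE.
by rewrite vec_mx_eq0 (negbTE Hi0).
Qed.

End Main.
End Aux.

Theorem proposition1 (R : realType) (M K r : nat) :
  (1 <= M)%N -> (1 <= K)%N -> (1 <= r)%N ->
  ((r.+1 * K - 1 <= M)%N <-> strongly_identifiable R M K r).
Proof.
move=> hM hK hr; split; first exact: Aux.suff_dir.
exact: Aux.nec_dir.
Qed.
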